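(* Let $M$ be a finite abelian group of exponent greater than $2$, and let $\mathrm{Half}(L_M)$ be the group of half-automorphisms of $L_M$. Then $$\mathrm{Half}(L_M)=\{F^+_{(f',f'',u,v)},\,F^-_{(f',f'',u,v)} : f'\in\mathrm{Aut}(K),\ f''\in\mathrm{Aut}(M),\ u,v\in M,\ u^2=v^2=1\}.$$ Moreover: (a) if $|M|$ is odd, then $|\mathrm{Half}(L_M)|=2\,|\mathrm{Aut}(K)|\,|\mathrm{Aut}(M)|$; (b) if $|M|$ is even and $M=C_{2i_1}\times\cdots\times C_{2i_s}\times M_1$ with $|M_1|$ odd, $s\geq1$, $i_j\geq 1$, then $|\mathrm{Half}(L_M)|=2^{2s+1}\,|\mathrm{Aut}(K)|\,|\mathrm{Aut}(M)|$.
   Context: $C_n$ denotes the cyclic group of order $n$. Let $K=\{1,a,b,c\}$ be the Klein four-group. Set $L_M=K\times M$ with the operation $(A,x)*(B,y)=(AB,xy)$ if $B=1$, and $(A,x)*(B,y)=(AB,x^{-1}y)$ if $B\neq 1$. For $u,v\in M$ with $u^2=v^2=1$, $\alpha_{(u,v)}:K\to M$ is defined by $\alpha_{(u,v)}(1)=1$, $\alpha_{(u,v)}(a)=u$, $\alpha_{(u,v)}(b)=v$, $\alpha_{(u,v)}(c)=uv$. For $f'\in\mathrm{Aut}(K)$, $f''\in\mathrm{Aut}(M)$ define $F^+_{(f',f'',u,v)}(A,x)=(f'(A),f''(x)\alpha_{(u,v)}(A))$ for all $(A,x)$, and $F^-_{(f',f'',u,v)}(1,x)=(1,f''(x))$,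 $F^-_{(f',f'',u,v)}(A,x)=(f'(A),f''(x^{-1})\alpha_{(u,v)}(A))$ for $A\neq 1$. A half-automorphism of a loop $L$ is a bijection $f:L\to L$ with $f(XY)\in\{f(X)f(Y),f(Y)f(X)\}$ for all $X,Y\in L$. *)

(* Defs.v *)
From mathcomp Require Import all_boot all_fingroup all_solvable.
Set Implicit Arguments. Unset Strict Implicit. Unset Printing Implicit Defensive.

(* Klein four-group K = {1,a,b,c}, encoded as bool*bool with componentwise xor. *)
Definition K : finType := (bool * bool)%type.
Definition k1 : K := (false, false).
Definition ka : K := (true, false).
Definition kb : K := (false, true).
Definition kc : K := (true, true).
Definition kmul (A B : K) : K := (addb A.1 B.1, addb A.2 B.2).

Definition autK : {set {perm K}} :=
  [set f : {perm K} | [forall A, forall B, f (kmul A B) == kmul (f A) (f B)]].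

Section LoopLM.
Variable M : finGroupType.
Local Open Scope group_scope.

Definition LM : finType := (K * M)%type.

Definition lmul (X Y : LM) : LM :=
  if Y.1 == k1 then (kmul X.1 Y.1, X.2 * Y.2)
  else (kmul X.1 Y.1, X.2^-1 * Y.2).

Definition alpha (u v : M) (A : K) : M :=
  if A == k1 then 1 else if A == ka then u else if A == kb then v else u * v.

Definition Fplus (f' : {perm K}) (f'' : {perm M}) (u v : M) (X : LM) : LM :=
  (f' X.1, f'' X.2 * alpha u v X.1).

Definition Fminus (f' : {perm K}) (f'' : {perm M}) (u v : M) (X : LM) : LM :=
  if X.1 == k1 then (k1, f'' X.2)
  else (f' X.1, f'' (X.2^-1) * alpha u v X.1).

Definition is_half_aut (f : LM -> LM) : Prop :=
  bijective f /\
  forall X Y, f (lmul X Y) = lmul (f X) (f Y) \/ f (lmul X Y) = lmul (f Y) (f X).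

Definition Half : {set {perm LM}} :=
  [set f : {perm LM} | [forall X, forall Y,
     (f (lmul X Y) == lmul (f X) (f Y)) || (f (lmul X Y) == lmul (f Y) (f X))]].

End LoopLM.

(* Main.v *)
Require Import Defs.
From mathcomp Require Import all_boot all_fingroup all_solvable.
From mathcomp Require Import zify.
From Stdlib Require Import Lia.
Set Implicit Arguments. Unset Strict Implicit. Unset Printing Implicit Defensive.

Lemma kmulC (A B : K) : kmul A B = kmul B A.
Proof. by case: A B => [[] []] [[] []]. Qed.
Lemma kmul1K (A : K) : kmul k1 A = A.
Proof. by case: A => [[] []]. Qed.
Lemma kmulK1 (A : K) : kmul A k1 = A.
Proof. by case: A => [[] []]. Qed.
Lemma kmulAA (A : K) : kmul A A = k1.
Proof. by case: A => [[] []]. Qed.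
Lemma kmul_eq1 (A B : K) : kmul A B = k1 -> A = B.
Proof. by case: A B => [[] []] [[] []]. Qed.

Section Proofs.
Variable M : finGroupType.
Hypothesis HabM : abelian [set: M].
Local Open Scope group_scope.

Lemma mulC (x y : M) : x * y = y * x.
Proof. exact: (centsP HabM) x (in_setT x) y (in_setT y). Qed.
Lemma mulCA (x y z : M) : x * (y * z) = y * (x * z).
Proof. by rewrite !mulgA (mulC x). Qed.
Lemma mulAC (x y z : M) : x * y * z = x * z * y.
Proof. by rewrite -!mulgA (mulC y). Qed.
Lemma invM (x y : M) : (x * y)^-1 = x^-1 * y^-1.
Proof. by rewrite invMg mulC. Qed.

Lemma rearr4 (p b q a : M) : p * b * (q * a) = q * p * (a * b).
Proof. by rewrite !mulgA (mulAC p b q) (mulAC (p * q) b a) (mulC q p). Qed.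

Definition pw (b : bool) (z : M) := if b then z else z^-1.
Lemma pw_pw b c z : pw b (pw c z) = pw (b == c) z.
Proof. by case: b c => [] [] //=; rewrite invgK. Qed.
Lemma pw_mul b p q : pw b (p * q) = pw b p * pw b q.
Proof. by case: b => //=; rewrite invM. Qed.
Lemma pw_sq2 b z : z * z = 1 -> pw b z = z.
Proof. by case: b => //= H; apply/eqP; rewrite eq_invg_mul H. Qed.
Lemma pw_inj b : injective (pw b).
Proof. by case: b => //; apply: invg_inj. Qed.
Lemma pw1 b : pw b 1 = 1.
Proof. by case: b => //=; rewrite invg1. Qed.
Lemma pwV b z : pw b z^-1 = (pw b z)^-1.
Proof. by case: b. Qed.

Lemma lmulE (X Y : LM M) : lmul X Y = (kmul X.1 Y.1, pw (Y.1 == k1) X.2 * Y.2).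
Proof. by rewrite /lmul; case: ifP. Qed.

Lemma sq_ne1 (x : M) : x ^+ 2 = 1 <-> x * x = 1.
Proof. by rewrite expgS expg1. Qed.

Lemma hom_V (h : M -> M) : (forall x y, h (x * y) = h x * h y) ->
  h 1 = 1 /\ forall x, h x^-1 = (h x)^-1.
Proof.
move=> hM; have h1 : h 1 = 1.
  by apply: (mulgI (h 1)); rewrite -hM !mulg1.
split=> // x; apply: (mulIg (h x)); by rewrite -hM !mulVg.
Qed.

Lemma exists_w : 2 < exponent [set: M] -> exists w : M, w * w != 1.
Proof.
move=> He; apply/existsP; apply: contraTT He => /existsPn H.
rewrite -leqNgt; apply: dvdn_leq => //; apply/exponentP => x _.
by have := H x; rewrite negbK => /eqP; rewrite expgS expg1.
Qed.


Section Forward.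
Variable f : LM M -> LM M.
Hypothesis finj : injective f.
Hypothesis fhalf : forall X Y, f (lmul X Y) = lmul (f X) (f Y) \/ f (lmul X Y) = lmul (f Y) (f X).
Variable w0 : M.
Hypothesis Hw0 : w0 * w0 != 1.

Lemma L_fst X Y : (f (lmul X Y)).1 = kmul (f X).1 (f Y).1.
Proof. by case: (fhalf X Y) => ->; rewrite !lmulE //= kmulC. Qed.

Lemma L_e : f (k1, 1) = (k1, 1).
Proof.
have H := fhalf (k1, 1) (k1, 1).
have E : lmul (k1, 1) (k1, 1) = (k1, 1 : M) by rewrite lmulE /= mulg1.
have H2 : f (k1, 1) = lmul (f (k1,1)) (f (k1,1)) by case: H; rewrite E.
move: H2; case: (f (k1, 1)) => A x; rewrite lmulE /= kmulAA => [[-> Hx]].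
move: Hx; rewrite eqxx /= => Hx; congr (_, _).
by apply: (mulgI x); rewrite mulg1.
Qed.

Lemma L_N0 x : x * x != 1 -> (f (k1, x)).1 = k1.
Proof.
move=> Hx; apply/eqP; apply: contraNT Hx => HA.
have : f (lmul (k1, x) (k1, x)) = f (k1, 1).
  rewrite L_e; have H := fhalf (k1,x) (k1,x).
  have -> : f (lmul (k1, x) (k1, x)) = lmul (f (k1,x)) (f (k1,x)) by case: H.
  by rewrite lmulE kmulAA (negbTE HA) /= mulVg.
by move/finj; rewrite lmulE /= => [[->]].
Qed.

Lemma L_N x : (f (k1, x)).1 = k1.
Proof.
case: (boolP (x * x == 1)) => Hx; last exact: L_N0.
have E : lmul (k1, w0 * x) (k1, w0^-1) = (k1, x).
  by rewrite lmulE /= mulC mulgA mulVg mul1g.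
rewrite -E L_fst !L_N0 //.
  by rewrite -invM eq_invg1.
rewrite mulgA (mulAC w0 x w0) -mulgA (eqP Hx) mulg1; exact: Hw0.
Qed.

Definition h x := (f (k1, x)).2.
Lemma fN x : f (k1, x) = (k1, h x).
Proof. by have := L_N x; rewrite /h; case: (f (k1, x)) => A y /= ->. Qed.

Lemma h_mul x y : h (x * y) = h x * h y.
Proof.
have E : lmul (k1, x) (k1, y) = (k1, x * y) by rewrite lmulE.
by case: (fhalf (k1,x) (k1,y)); rewrite E !fN !lmulE /= => [[]] // ->; rewrite mulC.
Qed.

Lemma h_inj : injective h.
Proof.
move=> x y Hxy; have : f (k1,x) = f (k1,y) by rewrite !fN Hxy.
by move/finj => [->].
Qed.


Lemma h1 : h 1 = 1. Proof. by have [] := hom_V h_mul. Qed.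
Lemma hV x : h x^-1 = (h x)^-1. Proof. by have [_ ->] := hom_V h_mul. Qed.
Lemma h_sq x : x * x != 1 -> h x * h x != 1.
Proof. move=> Hx; rewrite -h_mul; apply: contra Hx => /eqP H; apply/eqP; apply: h_inj; by rewrite H h1. Qed.

Definition g A := (f (A, 1)).1.
Lemma L_g A x : (f (A, x)).1 = g A.
Proof.
have E : lmul (A, 1) (k1, x) = (A, x) by rewrite lmulE /= ?eqxx /= mul1g kmulK1.
by rewrite -E L_fst L_N kmulK1.
Qed.
Lemma g_mul A B : g (kmul A B) = kmul (g A) (g B).
Proof.
have E : lmul (A, 1) (B, 1) = (kmul A B, 1 : M) by rewrite lmulE /= pw1 mulg1.
by rewrite /g -E L_fst.
Qed.
Lemma g1 : g k1 = k1. Proof. by rewrite /g L_e. Qed.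
Lemma g_ne A : A != k1 -> g A != k1.
Proof.
move=> HA; apply: contra HA => /eqP HgA.
have [hi hK hiK] := injF_bij h_inj.
have : f (A, 1) = f (k1, hi (f (A, 1)).2) by rewrite fN hiK -HgA /g -surjective_pairing.
by move/finj => [->].
Qed.
Lemma g_inj : injective g.
Proof.
move=> A B HAB; case: (eqVneq (kmul A B) k1) => [/kmul_eq1 //|/g_ne].
by rewrite g_mul HAB kmulAA eqxx.
Qed.

Definition u A := (f (A, 1)).2.
Lemma fA A x : f (A, x) = (g A, (f (A, x)).2).
Proof. by rewrite -(L_g A x) -surjective_pairing. Qed.

Lemma L_t A x : A != k1 -> exists b, (f (A, x)).2 = u A * pw b (h x).
Proof.
move=> HA.
have E : lmul (A, 1) (k1, x) = (A, x) by rewrite lmulE /= ?eqxx /= mul1g kmulK1.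
have := fhalf (A, 1) (k1, x); rewrite E fN (fA A 1) !lmulE.
move=> -[]/(congr1 snd) /= ->.
  by exists true.
by exists false; rewrite (negbTE (g_ne HA)) /= mulC.
Qed.

Lemma L_AA A x y : A != k1 ->
  h (x^-1 * y) = ((f (A, x)).2)^-1 * (f (A, y)).2 \/
  h (x^-1 * y) = ((f (A, y)).2)^-1 * (f (A, x)).2.
Proof.
move=> HA.
have E : lmul (A, x) (A, y) = (k1, x^-1 * y) by rewrite lmulE /= kmulAA (negbTE HA).
have := fhalf (A, x) (A, y); rewrite E fN (fA A x) (fA A y) !lmulE /= (negbTE (g_ne HA)).
by move=> -[]/(congr1 snd) /= ->; [left|right].
Qed.

Lemma LQ (v p q : M) : (v * p)^-1 * (v * q) = p^-1 * q.
Proof. by rewrite invM mulgA (mulC v^-1) mulgKV. Qed.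

Lemma L_sign A : A != k1 -> exists b, forall x, (f (A, x)).2 = u A * pw b (h x).
Proof.
move=> HA; have Ha := h_sq Hw0; set a := h w0 in Ha.
have [b Hb] := L_t w0 HA; exists b => y; have [c Hc] := L_t y HA.
case: (eqVneq b c) => [Ebc|nbc]; first by rewrite Hc Ebc.
have := L_AA w0 y HA; rewrite Hb Hc h_mul hV !LQ -/a.
case: b c nbc {Hb Hc} => [] [] // _ /=; rewrite ?invgK => -[] H.
- by move/mulgI: H => H; rewrite -H.
- exfalso; move: H; rewrite (mulC _ a) => /mulIg Ha'.
  by move: Ha; rewrite -{1}Ha' mulVg eqxx.
- exfalso; move/mulIg: H => Ha'.
  by move: Ha; rewrite -{1}Ha' mulVg eqxx.
- by move: H; rewrite (mulC (h y)^-1) => /mulgI H; rewrite -H.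
Qed.

Lemma kmul_ne1 A B : A != B -> kmul A B != k1.
Proof. by apply: contra => /eqP /kmul_eq1 ->. Qed.

Lemma L_AB A B x y : A != k1 -> B != k1 -> A != B ->
  (f (kmul A B, x^-1 * y)).2 = ((f (A, x)).2)^-1 * (f (B, y)).2 \/
  (f (kmul A B, x^-1 * y)).2 = ((f (B, y)).2)^-1 * (f (A, x)).2.
Proof.
move=> HA HB HAB.
have E : lmul (A, x) (B, y) = (kmul A B, x^-1 * y) by rewrite lmulE /= (negbTE HB).
have := fhalf (A, x) (B, y); rewrite E (fA A x) (fA B y) !lmulE /= (negbTE (g_ne HB)) (negbTE (g_ne HA)).
by move=> -[]/(congr1 snd) /= ->; [left|right].
Qed.

Lemma pq_lemma (v z : M) : (v * z) * (v * z^-1) = v * v.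
Proof. by rewrite mulgA (mulAC v z v) mulgK. Qed.

Lemma key_lemma (p q P : M) : p != q -> (p = P \/ p = P^-1) -> (q = P^-1 \/ q = P) -> p * q = 1.
Proof.
move=> npq [] Hp [] Hq; rewrite Hp Hq ?mulgV ?mulVg //; move: npq; by rewrite Hp Hq eqxx.
Qed.

Lemma sq_pw s b : b * b != 1 -> pw s b * pw s b != 1.
Proof.
move=> Hb; apply: contra Hb => /eqP H; apply/eqP; apply: (@pw_inj s).
by rewrite pw_mul H pw1.
Qed.

Lemma u_sq A B : A != k1 -> B != k1 -> A != B -> u (kmul A B) * u (kmul A B) = 1.
Proof.
move=> HA HB HAB; have HC := kmul_ne1 HAB; set C := kmul A B in HC *.
have [sA HsA] := L_sign HA; have [sB HsB] := L_sign HB; have [sC HsC] := L_sign HC.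
set b := h w0; have Hb : b * b != 1 by exact: h_sq.
set P := (u A)^-1 * (u B * pw sB b).
have H1 : u C * pw sC b = P \/ u C * pw sC b = P^-1.
  case: (L_AB 1 w0 HA HB HAB); rewrite -/C HsC HsA HsB invg1 mul1g h1 pw1 mulg1 => ->.
    by left.
  by right; rewrite -/b /P [in RHS]invMg invgK.
have H2 : u C * (pw sC b)^-1 = P^-1 \/ u C * (pw sC b)^-1 = P.
  have HBA : B != A by rewrite eq_sym.
  case: (L_AB w0 1 HB HA HBA); rewrite kmulC -/C HsC HsA HsB mulg1 hV h1 pw1 mulg1 pwV => ->.
    by left; rewrite -/b /P [in RHS]invMg invgK.
  by right.
have := key_lemma _ H1 H2; rewrite pq_lemma; apply.
apply: contra (sq_pw sC Hb) => /eqP /mulgI H.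
by rewrite {2}H mulgV.
Qed.

Lemma u_sq' A : A != k1 -> u A * u A = 1.
Proof.
case: A => [[] []] // _.
- by apply: (@u_sq ka kb).
- by apply: (@u_sq kb kc).
- by apply: (@u_sq ka kc).
Qed.

Lemma invu A : A != k1 -> (u A)^-1 = u A.
Proof. by move=> HA; apply/eqP; rewrite eq_invg_mul u_sq'. Qed.

Lemma u_mul A B : A != k1 -> B != k1 -> A != B -> u (kmul A B) = u A * u B.
Proof.
move=> HA HB HAB.
case: (L_AB 1 1 HA HB HAB); rewrite invg1 mulg1 -/(u A) -/(u B) -/(u (kmul A B)) => ->.
  by rewrite invu.
by rewrite invu // mulC.
Qed.

Lemma cancel_lemma (u1 u2 p q : M) : u1 * u1 = 1 ->
  (u1 * p)^-1 * (u2 * q) = u1 * u2 -> p = q.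
Proof.
move=> H1; rewrite invM; have -> : u1^-1 = u1 by apply/eqP; rewrite eq_invg_mul H1.
rewrite !mulgA (mulAC u1 p^-1 u2) -(mulgA (u1 * u2)) => H.
rewrite -{2}(mulg1 (u1 * u2)) in H; move/mulgI: H => H.
by apply/eqP; rewrite eq_mulVg1 H.
Qed.

Lemma sgn_eq A B sA sB : A != k1 -> B != k1 -> A != B ->
  (forall x, (f (A, x)).2 = u A * pw sA (h x)) ->
  (forall x, (f (B, x)).2 = u B * pw sB (h x)) -> sA = sB.
Proof.
move=> HA HB HAB HsA HsB.
set b := h w0; have Hb : b * b != 1 by exact: h_sq.
suff : pw sA b = pw sB b.
  case: sA sB {HsA HsB} => [] [] //= H; exfalso; move: Hb.
    by rewrite {2}H mulgV eqxx.
  by rewrite -{1}H mulVg eqxx.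
case: (L_AB w0 w0 HA HB HAB); rewrite mulVg -/(u (kmul A B)) u_mul // HsA HsB.
  by move/esym/cancel_lemma; apply; apply: u_sq'.
rewrite (mulC (u A)) => /esym/cancel_lemma H; apply/esym; apply: H; exact: u_sq'.
Qed.

Lemma forward : exists (f' : {perm K}) (f'' : {perm M}) (u0 v0 : M),
  [/\ f' \in autK, f'' \in Aut [set: M], u0 ^+ 2 = 1, v0 ^+ 2 = 1 &
      (f =1 Fplus f' f'' u0 v0 \/ f =1 Fminus f' f'' u0 v0)].
Proof.
exists (perm g_inj), (perm h_inj), (u ka), (u kb).
have Ka : ka != k1 by []. have Kb : kb != k1 by []. have Kc : kc != k1 by [].
have [sa Ha] := L_sign Ka; have [sb Hb] := L_sign Kb; have [sc Hc] := L_sign Kc.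
have Eb : sa = sb by apply: (sgn_eq (A:=ka) (B:=kb)).
have Ec : sa = sc by apply: (sgn_eq (A:=ka) (B:=kc)).
have Uc : u kc = u ka * u kb by apply: (u_mul (A:=ka) (B:=kb)).
rewrite -Eb in Hb; rewrite -Ec in Hc.
split.
- by rewrite inE; apply/forallP => A; apply/forallP => B; rewrite !permE g_mul.
- rewrite inE; apply/andP; split.
    by apply/subsetP => x _; exact: in_setT.
  by apply/morphicP => x y _ _; rewrite !permE h_mul.
- by apply/sq_ne1; apply: u_sq'.
- by apply/sq_ne1; apply: u_sq'.
case: sa Ha Hb Hc {Eb Ec} => Ha Hb Hc; [left|right]; case=> A x; case: A => [[] []].
- by rewrite /Fplus /= !permE (fA kc x) Hc /= Uc mulC.
- by rewrite /Fplus /= !permE (fA ka x) Ha /= mulC.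
- by rewrite /Fplus /= !permE (fA kb x) Hb /= mulC.
- by rewrite /Fplus /= !permE fN g1 mulg1.
- by rewrite /Fminus /= !permE (fA kc x) Hc /= Uc hV mulC.
- by rewrite /Fminus /= !permE (fA ka x) Ha /= hV mulC.
- by rewrite /Fminus /= !permE (fA kb x) Hb /= hV mulC.
- by rewrite /Fminus /= !permE fN.
Qed.

End Forward.
Section Backward.
Variables (f' : {perm K}) (f'' : {perm M}) (u0 v0 : M).
Hypothesis Hf' : f' \in autK.
Hypothesis Hf'' : f'' \in Aut [set: M].
Hypothesis Hu : u0 * u0 = 1.
Hypothesis Hv : v0 * v0 = 1.

Lemma f'_mul A B : f' (kmul A B) = kmul (f' A) (f' B).
Proof. by move: Hf'; rewrite inE => /forallP /(_ A) /forallP /(_ B) /eqP. Qed.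
Lemma f'k1 : f' k1 = k1.
Proof. by rewrite -{1}(kmulAA k1) f'_mul kmulAA. Qed.
Lemma f'_eq1 A : (f' A == k1) = (A == k1).
Proof.
apply/eqP/eqP => [H|->]; last exact: f'k1.
by apply: (@perm_inj _ f'); rewrite H f'k1.
Qed.
Lemma f''_mul x y : f'' (x * y) = f'' x * f'' y.
Proof. by have /morphicP := Aut_morphic Hf''; apply; rewrite inE. Qed.
Lemma f''V x : f'' x^-1 = (f'' x)^-1.
Proof. by have [_ ->] := hom_V f''_mul. Qed.
Lemma f''1 : f'' 1 = 1.
Proof. by have [-> _] := hom_V f''_mul. Qed.
Lemma f''pw b x : f'' (pw b x) = pw b (f'' x).
Proof. by case: b => //=; rewrite f''V. Qed.

Notation al := (alpha u0 v0).
Lemma alpha_mul A B : al (kmul A B) = al A * al B.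
Proof.
case: A B => [[] []] [[] []]; rewrite /alpha /= ?mul1g ?mulg1 ?Hu ?Hv //.
all: first [ by rewrite mulgA (mulAC u0 v0 u0) Hu mul1g Hv
           | by rewrite (mulAC u0 v0 u0) Hu mul1g
           | by rewrite -mulgA Hv mulg1
           | by rewrite mulgA Hu mul1g
           | by rewrite mulCA Hv mulg1
           | exact: mulC ].
Qed.

Lemma alpha_sq A : al A * al A = 1.
Proof. by rewrite -alpha_mul kmulAA. Qed.
Lemma pw_al b A : pw b (al A) = al A.
Proof. exact/pw_sq2/alpha_sq. Qed.

Definition Gf (sg : K -> bool) (X : LM M) : LM M :=
  (f' X.1, pw (sg X.1) (f'' X.2) * al X.1).

Lemma G_half sg :
  (forall A B, (sg (kmul A B) = sg A /\ sg (kmul A B) = sg B) \/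
               ((sg (kmul A B) == (B == k1)) = sg A /\ sg (kmul A B) = ((A == k1) == sg B))) ->
  forall X Y, Gf sg (lmul X Y) = lmul (Gf sg X) (Gf sg Y) \/
              Gf sg (lmul X Y) = lmul (Gf sg Y) (Gf sg X).
Proof.
move=> Hsg [A x] [B y].
have EXY : Gf sg (lmul (A, x) (B, y)) = (kmul (f' A) (f' B),
   pw (sg (kmul A B) == (B == k1)) (f'' x) * pw (sg (kmul A B)) (f'' y) * (al A * al B)).
  by rewrite /Gf lmulE /= f'_mul f''_mul f''pw pw_mul pw_pw alpha_mul.
have E1 : lmul (Gf sg (A, x)) (Gf sg (B, y)) = (kmul (f' A) (f' B),
   pw ((B == k1) == sg A) (f'' x) * pw (sg B) (f'' y) * (al A * al B)).
  rewrite /Gf lmulE /= f'_eq1 pw_mul pw_pw pw_al; congr (_, _).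
  by rewrite !mulgA (mulAC _ (al A)).
have E2 : lmul (Gf sg (B, y)) (Gf sg (A, x)) = (kmul (f' A) (f' B),
   pw (sg A) (f'' x) * pw ((A == k1) == sg B) (f'' y) * (al A * al B)).
  rewrite /Gf lmulE /= f'_eq1 pw_mul pw_pw pw_al kmulC; congr (_, _).
  exact: rearr4.
rewrite EXY E1 E2.
case: (Hsg A B) => -[-> ->]; [left|right] => //.
by rewrite eq_sym.
Qed.

Lemma G_inj sg : injective (Gf sg).
Proof.
move=> [A x] [B y]; rewrite /Gf /= => -[/perm_inj EAB].
by rewrite EAB => /mulIg /pw_inj /perm_inj ->.
Qed.

Lemma Fplus_G : Fplus f' f'' u0 v0 =1 Gf (fun _ => true).
Proof. by []. Qed.

Lemma Fminus_G : Fminus f' f'' u0 v0 =1 Gf (fun A => A == k1).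
Proof.
case=> A x; rewrite /Fminus /Gf /=; case: eqP => [->|_] /=.
  by rewrite f'k1 /alpha eqxx mulg1.
by rewrite f''V.
Qed.

Lemma cond_plus A B : ((fun _ : K => true) (kmul A B) = (fun _ : K => true) A /\ (fun _ : K => true) (kmul A B) = (fun _ : K => true) B) \/
  (((fun _ : K => true) (kmul A B) == (B == k1)) = (fun _ : K => true) A /\ (fun _ : K => true) (kmul A B) = ((A == k1) == (fun _ : K => true) B)).
Proof. by left. Qed.

Lemma cond_minus A B : let sg := (fun A : K => A == k1) in
  (sg (kmul A B) = sg A /\ sg (kmul A B) = sg B) \/
  ((sg (kmul A B) == (B == k1)) = sg A /\ sg (kmul A B) = ((A == k1) == sg B)).
Proof. by case: A B => [[] []] [[] []]; first [by left | by right]. Qed.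

Lemma backward (f : LM M -> LM M) :
  (f =1 Fplus f' f'' u0 v0 \/ f =1 Fminus f' f'' u0 v0) -> is_half_aut f.
Proof.
have gen : forall sg, f =1 Gf sg ->
  (forall A B, (sg (kmul A B) = sg A /\ sg (kmul A B) = sg B) \/
               ((sg (kmul A B) == (B == k1)) = sg A /\ sg (kmul A B) = ((A == k1) == sg B))) ->
  is_half_aut f.
  move=> sg Hf Hsg; split.
    by apply: injF_bij => X Y; rewrite !Hf; apply: G_inj.
  by move=> X Y; rewrite !Hf; apply: G_half.
case=> Hf.
  by apply: (gen (fun _ => true)) => [X|]; [rewrite Hf Fplus_G | exact: cond_plus].
by apply: (gen (fun A => A == k1)) => [X|]; [rewrite Hf Fminus_G | exact: cond_minus].
Qed.

End Backward.
Definition FF (b : bool) := if b then @Fplus M else @Fminus M.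

Lemma charac (Hexp : 2 < exponent [set: M]) (f : LM M -> LM M) :
  is_half_aut f <->
  exists (f' : {perm K}) (f'' : {perm M}) (u0 v0 : M),
    [/\ f' \in autK, f'' \in Aut [set: M], u0 ^+ 2 = 1, v0 ^+ 2 = 1 &
        (f =1 Fplus f' f'' u0 v0 \/ f =1 Fminus f' f'' u0 v0)].
Proof.
split.
  move=> [fbij fhalf]; have [w0 Hw0] := exists_w Hexp.
  exact: (forward (bij_inj fbij) fhalf Hw0).
case=> f' [f''] [u0] [v0] [Hf' Hf'' Hu Hv Hf].
exact: (backward Hf' Hf'' (iffLR (sq_ne1 u0) Hu) (iffLR (sq_ne1 v0) Hv) Hf).
Qed.

Lemma charac2 (Hexp : 2 < exponent [set: M]) (f : LM M -> LM M) :
  is_half_aut f -> exists b (f' : {perm K}) (f'' : {perm M}) (u0 v0 : M),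
    [/\ f' \in autK, f'' \in Aut [set: M], u0 ^+ 2 = 1, v0 ^+ 2 = 1 &
        f =1 FF b f' f'' u0 v0].
Proof.
move/(charac Hexp) => [f' [f'' [u0 [v0 [Hf' Hf'' Hu Hv [Hf|Hf]]]]]].
  by exists true, f', f'', u0, v0.
by exists false, f', f'', u0, v0.
Qed.

Definition Ext (p : {perm LM M}) : bool * {ffun K -> K} * {ffun M -> M} * M * M :=
  ([forall x, (p (ka, x)).2 == (p (k1, x)).2 * (p (ka, 1)).2],
   [ffun A => (p (A, 1)).1], [ffun x => (p (k1, x)).2], (p (ka, 1)).2, (p (kb, 1)).2).

Lemma Ext_F (Hexp : 2 < exponent [set: M]) (p : {perm LM M}) b f' f'' u0 v0 :
  f' \in autK -> f'' \in Aut [set: M] ->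
  p =1 FF b f' f'' u0 v0 -> Ext p = (b, val f', val f'', u0, v0).
Proof.
move=> Hf' Hf'' Hp.
have h1 := f''1 Hf''.
have k1E := f'k1 Hf'.
rewrite /Ext; congr (_, _, _, _, _).
- case: b Hp => Hp.
    by apply/forallP => x; rewrite !Hp /= /Fplus /= h1 mul1g mulg1.
  have [w Hw] := exists_w Hexp.
  apply/negP => /forallP /(_ w) /eqP; rewrite !Hp /= /Fminus /= invg1 h1 mul1g f''V //.
  move/mulIg => H.
  have : f'' (w * w) == 1 by rewrite (f''_mul Hf'') -{1}H mulVg.
  rewrite -h1 (inj_eq perm_inj) => /eqP Hww; by rewrite Hww eqxx in Hw.
- apply/ffunP => A; rewrite ffunE Hp pvalE; case: b {Hp} => //=.
  by rewrite /Fminus /=; case: (A =P k1) => [->|_] //=.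
- apply/ffunP => x; rewrite ffunE Hp pvalE; case: b {Hp} => //=.
  by rewrite mulg1.
- by rewrite Hp; case: b {Hp} => /=; rewrite /Fplus /Fminus /= ?invg1 h1 mul1g.
- by rewrite Hp; case: b {Hp} => /=; rewrite /Fplus /Fminus /= ?invg1 h1 mul1g.
Qed.

Definition Tw := [set x : M | x ^+ 2 == 1].

Lemma memH (p : {perm LM M}) : p \in Half M <-> is_half_aut p.
Proof.
rewrite inE; split.
  move=> /forallP H; split; first exact: (injF_bij (@perm_inj _ p)).
  by move=> X Y; have /forallP /(_ Y) /orP [/eqP|/eqP] := H X; [left|right].
move=> [_ Hh]; apply/forallP => X; apply/forallP => Y.
by case: (Hh X Y) => ->; rewrite eqxx ?orbT.
Qed.

Lemma Half_card (Hexp : 2 < exponent [set: M]) :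
  #|Half M| = (2 * #|autK| * #|Aut [set: M]| * #|Tw| * #|Tw|)%N.
Proof.
pose S := setX (setX (setX (setX [set: bool] [set val f | f in autK])
            [set val f | f in Aut [set: M]]) Tw) Tw.
have cardS : #|S| = (2 * #|autK| * #|Aut [set: M]| * #|Tw| * #|Tw|)%N.
  by rewrite !cardsX cardsT card_bool !card_imset //; exact: val_inj.
rewrite -cardS -(card_in_imset (f := Ext) (D := Half M)).
  suff ES : [set Ext p | p in Half M] = S by rewrite ES.
  apply/setP => t; apply/imsetP/idP.
    case=> p /memH Hp ->.
    have [b [f' [f'' [u0 [v0 [Hf' Hf'' Hu Hv Hf]]]]]] := charac2 Hexp Hp.
    rewrite (Ext_F Hexp Hf' Hf'' Hf) !in_setX in_setT !imset_f // !inE Hu eqxx.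
    by rewrite Hv eqxx.
  case: t => [[[[b F1] F2] u0] v0].
  rewrite !in_setX => /andP[/andP[/andP[/andP[_ HF1] HF2] Hu] Hv].
  case/imsetP: HF1 => f' Hf' ->; case/imsetP: HF2 => f'' Hf'' ->.
  move: Hu Hv; rewrite !inE => /eqP Hu /eqP Hv.
  have Hh : is_half_aut (FF b f' f'' u0 v0).
    by apply/(charac Hexp); exists f', f'', u0, v0; split => //; case: b; [left|right].
  have Hinj := bij_inj Hh.1.
  have [p HP] : exists p : {perm LM M}, p =1 FF b f' f'' u0 v0.
    by exists (perm Hinj); exact: permE.
  exists p; last by rewrite (Ext_F Hexp Hf' Hf'' HP).
  apply/memH; apply/(charac Hexp); exists f', f'', u0, v0; split => //.
  by move: HP; rewrite /FF; case: b {Hh Hinj} => HP; [left|right].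
move=> p1 p2 /memH H1 /memH H2 E12.
have [b1 [f1' [f1'' [u1 [v1 [Hf1' Hf1'' _ _ Hf1]]]]]] := charac2 Hexp H1.
have [b2 [f2' [f2'' [u2 [v2 [Hf2' Hf2'' _ _ Hf2]]]]]] := charac2 Hexp H2.
move: E12; rewrite (Ext_F Hexp Hf1' Hf1'' Hf1) (Ext_F Hexp Hf2' Hf2'' Hf2).
move=> [Eb /val_inj Ef' /val_inj Ef'' Eu Ev]; subst.
by apply/permP => X; rewrite Hf1 Hf2.
Qed.

Lemma Tw_group_set : group_set Tw.
Proof.
apply/group_setP; split; first by rewrite inE expg1n.
move=> x y; rewrite !inE => /eqP Hx /eqP Hy.
by rewrite expgMn ?Hx ?Hy ?mulg1 //; exact: mulC.
Qed.
Canonical Twg := Group Tw_group_set.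

Lemma Tw_odd (G : {group M}) : odd #|G| -> G :&: Tw = 1.
Proof.
move=> Hodd; apply/setP => x; rewrite !inE; apply/andP/eqP => [[Gx /eqP Hx]|->].
  apply/eqP; rewrite -order_eq1 -dvdn1.
  have /eqP <- : coprime 2 #|G| by rewrite coprime2n.
  by rewrite dvdn_gcd order_dvdn Hx eqxx order_dvdG.
by rewrite group1 expg1n.
Qed.

Lemma dprod_T A B (G : {group M}) : A \x B = G -> #|G :&: Tw| = (#|A :&: Tw| * #|B :&: Tw|)%N.
Proof.
move=> defG; have [[K0 H0 eA eB] eG cKH tiKH] := dprodP defG; subst A B; rewrite -eG.
have tiT : (K0 :&: Twg)%G :&: (H0 :&: Twg)%G = 1.
  apply/trivgP; rewrite -tiKH; apply: setISS; exact: subsetIl.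
rewrite -(TI_cardMg tiT) /=; apply: eq_card => x; apply/idP/idP.
  rewrite inE => /andP[/mulsgP[a b Ka Hb ->]].
  rewrite inE expgMn; last exact: mulC.
  move=> /eqP Hab; have Hab' : a ^+ 2 = (b ^+ 2)^-1 by apply/eqP; rewrite eq_mulgV1 invgK Hab.
  have : a ^+ 2 \in K0 :&: H0 by rewrite inE groupX //= Hab' groupV groupX.
  rewrite tiKH inE => /eqP Ha2.
  have Hb2 : b ^+ 2 = 1 by apply: invg_inj; rewrite -Hab' Ha2 invg1.
  by apply: mem_mulg; rewrite !inE ?Ka ?Hb ?Ha2 ?Hb2 eqxx.
case/mulsgP=> a b; rewrite !inE => /andP[Ka /eqP Ha] /andP[Hb /eqP Hb2] ->.
rewrite mem_mulg //= expgMn; last exact: mulC.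
by rewrite Ha Hb2 mulg1.
Qed.

Lemma bigdprod_T I r (P : pred I) E (G : {group M}) :
  \big[dprod/1]_(i <- r | P i) E i = G ->
  (\prod_(i <- r | P i) #|E i :&: Tw|)%N = #|G :&: Tw|.
Proof.
elim/big_rec2: _ G => [G <- | i A B _ IH G defG].
  rewrite (_ : 1 :&: Tw = 1) ?cards1 //.
  by apply/setP => x; rewrite !inE; case: eqP => // ->; rewrite expg1n eqxx.
have [[_ H _ defH] _ _ _] := dprodP defG.
by rewrite (dprod_T defG) (IH H) defH.
Qed.

Lemma cyc_T (g : M) i : 0 < i -> #[g] = (2 * i)%N -> #|<[g]> :&: Tw| = 2.
Proof.
move=> i0 og.
have gi1 : g ^+ i != 1.
  rewrite -order_dvdn og; apply/negP => /dvdn_leq => /(_ i0).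
  by rewrite -{2}(mul1n i) leq_pmul2r // ltnn.
suff -> : <[g]> :&: Tw = [set 1; g ^+ i] by rewrite cards2 eq_sym gi1.
apply/setP => x; rewrite !inE; apply/andP/orP.
  case=> /cyclePmin [k klt ->] /eqP Hk.
  move: Hk; rewrite -expgM => /eqP; rewrite -order_dvdn og (mulnC k) dvdn_pmul2l // => /dvdnP [m km].
  move: klt; rewrite og km ltn_pmul2r //.
  by case: m {km} => [|[|m]] //= _; [left; rewrite mul0n expg0 | right; rewrite mul1n].
case=> /eqP ->; first by rewrite group1 expg1n.
rewrite mem_cycle -expgM mulnC -og expg_order; done.
Qed.

End Proofs.

Lemma arith (a b X : nat) : 2 * a * b * X * X = X * X * 2 * a * b.
Proof.
nia.
Qed.

Theorem theorem4p13 (M : finGroupType)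
  (HabM : abelian [set: M]) (Hexp : 2 < exponent [set: M]) :
  (forall f : LM M -> LM M,
     is_half_aut f <->
     exists (f' : {perm K}) (f'' : {perm M}) (u v : M),
       [/\ f' \in autK, f'' \in Aut [set: M], (u ^+ 2 = 1)%g, (v ^+ 2 = 1)%g &
           (f =1 Fplus f' f'' u v \/ f =1 Fminus f' f'' u v)])
  /\ (odd #|M| -> #|Half M| = 2 * #|autK| * #|Aut [set: M]|)
  /\ (forall (s : nat) (g : 'I_s -> M) (M1 : {group M}),
        ~~ odd #|M| -> 0 < s ->
        (forall j, exists2 i, 0 < i & #[g j]%g = 2 * i) ->
        odd #|M1| ->
        ((\big[dprod/1]_(j < s) <[g j]>) \x M1)%g = [set: M] ->
        #|Half M| = 2 ^ (2 * s + 1) * #|autK| * #|Aut [set: M]|).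
Proof.
split; first exact: (charac HabM Hexp).
split.
  move=> Hodd; rewrite (Half_card HabM Hexp).
  have := Tw_odd (G := [set: M]%G); rewrite setTI cardsT => /(_ Hodd) ->.
  by rewrite cards1 !muln1.
move=> s g M1 Heven s0 Hg Hodd1 Hdec.
have [[B0 M0 eB eM] _ _ _] := dprodP Hdec.
have HT : #|Tw M| = 2 ^ s.
  rewrite -(setTI (Tw M)) (dprod_T HabM Hdec) (Tw_odd Hodd1) cards1 muln1.
  rewrite eB -(bigdprod_T HabM eB).
  rewrite (eq_bigr (fun _ => 2)) => [|j _]; last first.
    by have [i i0 oi] := Hg j; exact: cyc_T i0 oi.
  by rewrite prod_nat_const card_ord.
have -> : 2 ^ (2 * s + 1) = 2 ^ s * 2 ^ s * 2 by rewrite -expnD addnn -mul2n addn1 expnSr.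
rewrite (Half_card HabM Hexp) HT; exact: arith.
Qed.
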